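(* Let $n$ be a positive integer such that $n$ is odd and $n\not\equiv 1 \pmod 3$. Then the $n$-th Catalan number $C_n=\frac{1}{n+1}\binom{2n}{n}$ is divisible by $n+2$.
   Context: The Catalan numbers are $C_n=\frac{1}{n+1}\binom{2n}{n}=\frac{(2n)!}{(n+1)!\,n!}$ for $n\ge 0$. *)

(* Defs.v *)
From mathcomp Require Import all_boot.

(* n-th Catalan number C_n = (1/(n+1)) * binom(2n, n); the division is exact. *)
Definition catalan (n : nat) : nat := 'C(n.*2, n) %/ n.+1.

(* Main.v *)
Require Import Defs.
From mathcomp Require Import all_boot.
From mathcomp Require Import zify.

Lemma cat_dvd n : n.+1 %| 'C(n.*2, n).
Proof.
have H := mul_bin_left n.*2 n.
have E : 'C(n.*2, n) = n.+1 * 'C(n.*2, n) - n.+1 * 'C(n.*2, n.+1).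
  rewrite H -addnn addnK -mulnBl subSnn mul1n //.
by rewrite E; apply: dvdn_sub; rewrite dvdn_mulr.
Qed.

Lemma cat_spec n : catalan n * n.+1 = 'C(n.*2, n).
Proof. rewrite /catalan divnK //; exact: cat_dvd. Qed.

Lemma cat_rec n : catalan n.+1 * n.+2 = 2 * (n.*2.+1) * catalan n.
Proof.
have H1 := mul_bin_diag (n.*2.+2) n.
have H2 := mul_bin_down (n.*2.+1) n.
have E1 := cat_spec n.+1.
have E2 := cat_spec n.
rewrite doubleS in E1.
simpl in H1, H2.
have HS : n.*2.+1 - n = n.+1 by rewrite -addnn; lia.
rewrite HS in H2.
rewrite E1.
apply/eqP; rewrite -(eqn_pmul2l (ltn0Sn n)) -(eqn_pmul2l (ltn0Sn n)); apply/eqP.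
rewrite -H1; rewrite -E2 in H2.
have -> : (n.*2.+2) = 2 * n.+1 by rewrite -addnn; lia.
move: H2; set B := 'C(_, _); set c := catalan n; set m := n.*2.+1 => H2.
rewrite mulnA [n.+1 * _]mulnC -mulnA -mulnA -H2; nia.
Qed.

Theorem theorem2p1 (n : nat) :
  0 < n -> odd n -> n %% 3 != 1 -> n.+2 %| catalan n.
Proof.
move=> n0 on n3.
have cop : coprime n.+2 (2 * n.*2.+1).
  rewrite coprimeMr; apply/andP; split.
    by rewrite coprime_sym coprime2n /= on.
  rewrite /coprime; apply/eqP.
  set g := gcdn _ _.
  have g1 : g %| n.+2 by apply: dvdn_gcdl.
  have g2 : g %| n.*2.+1 by apply: dvdn_gcdr.
  have g3 : g %| 3.
    have -> : 3 = 2 * n.+2 - n.*2.+1 by rewrite -addnn; lia.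
    by apply: dvdn_sub => //; apply: dvdn_mull.
  have gle : g <= 3 by apply: dvdn_leq.
  clearbody g; clear g2; move: g1 g3 gle; case: g => [|[|[|[|g]]]] // g1 _ _.
  exfalso; move: g1 => /dvdnP [k hk].
  move: n3; lia.
rewrite -(Gauss_dvdr _ cop) -cat_rec; exact: dvdn_mull.
Qed.
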